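(* Let $r, s \ge 5$ be integers. Then the graph $P_r \,\square\, P_s$ has a unique $\mathrm{gp_e}$-set, i.e., there is exactly one edge general position set of $P_r \,\square\, P_s$ of cardinality $\mathrm{gp_e}(P_r \,\square\, P_s)$.
   Context: $P_n$ denotes the path on $n$ vertices. The Cartesian product $G \,\square\, H$ has vertex set $V(G)\times V(H)$, with $(g,h)$ adjacent to $(g',h')$ iff either $gg' \in E(G)$ and $h = h'$, or $g = g'$ and $hh' \in E(H)$. A set $S$ of edges of a graph $G$ is an edge general position set if no geodesic (shortest path) of $G$ contains three edges of $S$; $\mathrm{gp_e}(G)$ is the maximum cardinality of an edge general position set of $G$, and an edge general position set of maximum cardinality is called a $\mathrm{gp_e}$-set. *)

(* Defs.v *)
From mathcomp Require Import all_boot.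
Set Implicit Arguments. Unset Strict Implicit. Unset Printing Implicit Defensive.

Section Graphs.
Variables (T : finType) (e : rel T).

Definition edge_set : {set {set T}} :=
  [set A : {set T} | [exists x, exists y, e x y && (A == [set x; y])]].

Definition walk_edges (x : T) (p : seq T) : seq {set T} :=
  pairmap (fun a b => [set a; b]) x p.

Definition geodesic (x : T) (p : seq T) : Prop :=
  path e x p /\
  forall q : seq T, path e x q -> last x q = last x p -> size p <= size q.

Definition edge_gp_set (S : {set {set T}}) : Prop :=
  S \subset edge_set /\
  forall (x : T) (p : seq T), geodesic x p ->
    #|[set A in S | A \in walk_edges x p]| < 3.

Definition gpe_set (S : {set {set T}}) : Prop :=
  edge_gp_set S /\ forall S' : {set {set T}}, edge_gp_set S' -> #|S'| <= #|S|.

End Graphs.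

Definition path_graph_rel (n : nat) : rel 'I_n :=
  fun i j => (i.+1 == j :> nat) || (j.+1 == i :> nat).

Definition cart_prod_rel (A B : finType) (eA : rel A) (eB : rel B) : rel (A * B) :=
  fun u v => (eA u.1 v.1 && (u.2 == v.2)) || ((u.1 == v.1) && eB u.2 v.2).

Definition grid_rel (r s : nat) : rel ('I_r * 'I_s) :=
  cart_prod_rel (@path_graph_rel r) (@path_graph_rel s).
Arguments grid_rel : clear implicits.

(* Main.v *)
Require Import Defs.
From mathcomp Require Import all_boot.
From mathcomp Require Import zify.
Set Implicit Arguments. Unset Strict Implicit. Unset Printing Implicit Defensive.

(* Proof: the gp_e-set is the set of 2r+2s-8 edges joining a
   non-corner boundary vertex to its interior neighbour. *)

Definition c1 r s (x : 'I_r * 'I_s) : nat := x.1.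
Definition c2 r s (x : 'I_r * 'I_s) : nat := x.2.

Section Grid.
Variables r s : nat.
Notation T := ('I_r * 'I_s)%type.
Notation e := (grid_rel r s).

Definition ad (x y : nat) := (x - y) + (y - x).
Lemma ad_key x a b c : ad x a + ad a b + ad b c <= ad x c ->
  (x <= c -> a <= b) /\ (c <= x -> b <= a).
Proof. rewrite /ad. lia. Qed.
Lemma ad_tri x a c : ad x c <= ad x a + ad a c.
Proof. rewrite /ad. lia. Qed.
Lemma mono_aux (x1 a1 b1 c1 x2 a2 b2 c2 t t' : nat) : t <= t' -> t' <= ad x1 c1 + ad x2 c2 ->
 ad x1 a1 + ad x2 a2 <= t ->  ad a1 b1 + ad a2 b2 <= t' - t ->
 ad b1 c1 + ad b2 c2 <= ad x1 c1 + ad x2 c2 - t' ->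
 ((x1 <= c1 -> a1 <= b1) /\ (c1 <= x1 -> b1 <= a1)) /\
 ((x2 <= c2 -> a2 <= b2) /\ (c2 <= x2 -> b2 <= a2)).
Proof.
move=> *.
have t1 := ad_tri x1 a1 c1. have t2 := ad_tri a1 b1 c1.
have t3 := ad_tri x2 a2 c2. have t4 := ad_tri a2 b2 c2.
have [k3 k4] : ad x1 a1 + ad a1 b1 + ad b1 c1 <= ad x1 c1 /\
   ad x2 a2 + ad a2 b2 + ad b2 c2 <= ad x2 c2 by lia.
by split; apply: ad_key.
Qed.
Definition d (u v : T) : nat := ad u.1 v.1 + ad u.2 v.2.

Lemma eP (u v : T) : e u v =
  (((u.1.+1 == v.1 :> nat) || (v.1.+1 == u.1 :> nat)) && (u.2 == v.2))
  || ((u.1 == v.1) && ((u.2.+1 == v.2 :> nat) || (v.2.+1 == u.2 :> nat))).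
Proof. by []. Qed.

Lemma pair_eqP (u v : T) : u = v <-> (u.1 = v.1 :> nat /\ u.2 = v.2 :> nat).
Proof.
split=> [->//|[h1 h2]]. case: u v h1 h2 => [a b] [c d'] /= h1 h2.
by rewrite (val_inj h1) (val_inj h2).
Qed.

Lemma e_coords (u v : T) : e u v ->
  (u.2 = v.2 :> nat /\ (u.1.+1 = v.1 :> nat \/ v.1.+1 = u.1 :> nat)) \/
  (u.1 = v.1 :> nat /\ (u.2.+1 = v.2 :> nat \/ v.2.+1 = u.2 :> nat)).
Proof.
rewrite eP => /orP [/andP [/orP [/eqP h|/eqP h] /eqP h2]|/andP [/eqP h2 /orP [/eqP h|/eqP h]]];
 [left; split; [by rewrite h2|by left] | left; split; [by rewrite h2|by right]
 | right; split; [by rewrite h2| by left] | right; split; [by rewrite h2|by right]].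
Qed.

Lemma coords_e (u v : T) :
  (u.2 = v.2 :> nat /\ (u.1.+1 = v.1 :> nat \/ v.1.+1 = u.1 :> nat)) \/
  (u.1 = v.1 :> nat /\ (u.2.+1 = v.2 :> nat \/ v.2.+1 = u.2 :> nat)) -> e u v.
Proof.
rewrite eP => -[[h2 [h|h]]|[h2 [h|h]]].
- by rewrite h eqxx /= (val_inj h2) eqxx.
- by rewrite h eqxx orbT (val_inj h2) eqxx.
- by rewrite (val_inj h2) eqxx h eqxx orbT.
- by rewrite (val_inj h2) eqxx h eqxx !orbT.
Qed.

Lemma e_d (u v : T) : e u v -> d u v = 1.
Proof. move/e_coords; rewrite /d /ad; lia. Qed.

Lemma d_e (u v : T) : d u v = 1 -> e u v.
Proof. rewrite /d /ad => h; apply: coords_e; lia. Qed.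

Lemma d0 (u v : T) : d u v = 0 -> u = v.
Proof. rewrite /d /ad => h; apply/pair_eqP; lia. Qed.

Definition step (u v : T) : T :=
  if u.1 < v.1 then (insubd u.1 u.1.+1, u.2)
  else if v.1 < u.1 then (insubd u.1 u.1.-1, u.2)
  else if u.2 < v.2 then (u.1, insubd u.2 u.2.+1)
  else (u.1, insubd u.2 u.2.-1).

Lemma step_prop (u v : T) : 0 < d u v ->
  e u (step u v) /\ d (step u v) v = (d u v).-1.
Proof.
have l1 := ltn_ord v.1; have l2 := ltn_ord v.2.
have l3 := ltn_ord u.1; have l4 := ltn_ord u.2.
rewrite /step /d /ad => h.
case: ifP => h1.
  have e1 : val (insubd u.1 u.1.+1) = u.1.+1 by rewrite val_insubd; case: ifP => //; lia.
  split; first by apply: coords_e; left; rewrite /= e1; lia.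
  rewrite /= e1; lia.
case: ifP => h2.
  have e1 : val (insubd u.1 u.1.-1) = u.1.-1 by rewrite val_insubd; case: ifP => //; lia.
  split; first by apply: coords_e; left; rewrite /= e1; lia.
  rewrite /= e1; lia.
case: ifP => h3.
  have e1 : val (insubd u.2 u.2.+1) = u.2.+1 by rewrite val_insubd; case: ifP => //; lia.
  split; first by apply: coords_e; right; rewrite /= e1; lia.
  rewrite /= e1; lia.
have e1 : val (insubd u.2 u.2.-1) = u.2.-1 by rewrite val_insubd; case: ifP => //; lia.
split; first by apply: coords_e; right; rewrite /= e1; lia.
rewrite /= e1; lia.
Qed.

Fixpoint seg (n : nat) (u v : T) : seq T :=
  if n is n'.+1 then step u v :: seg n' (step u v) v else [::].

Lemma seg_prop n (u v : T) : d u v = n ->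
  [/\ path e u (seg n u v), last u (seg n u v) = v & size (seg n u v) = n].
Proof.
elim: n u => [|n IH] u h /=; first by rewrite (d0 h).
have hd : 0 < d u v by rewrite h.
have [h1 h2] := step_prop hd.
have hn : d (step u v) v = n by rewrite h2 h.
have [p1 p2 p3] := IH (step u v) hn.
by rewrite h1 p1 p2 p3.
Qed.

Definition ord_ok (b : bool) (x y : nat) := if b then x <= y else y <= x.
Definition mono (st : bool * bool) (u v : T) :=
  ord_ok st.1 (c1 u) (c1 v) && ord_ok st.2 (c2 u) (c2 v).

Fixpoint stair (x : T) (ps : seq T) : seq T :=
  if ps is y :: ps' then seg (d x y) x y ++ stair y ps' else [::].

Lemma stair_path x ps : path e x (stair x ps) /\ last x (stair x ps) = last x ps.
Proof.
elim: ps x => [|y ps IH] x //=.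
have [p1 p2 _] := seg_prop (erefl (d x y)).
have [q1 q2] := IH y.
by rewrite cat_path last_cat p1 p2 q1 q2.
Qed.

Lemma stair_size st x ps : path (mono st) x ps ->
  size (stair x ps) = d x (last x ps) /\ mono st x (last x ps).
Proof.
elim: ps x => [|y ps IH] x /=.
  move=> _; split; first by rewrite /d /ad; lia.
  by rewrite /mono /ord_ok /c1 /c2; case: st => [[] []] /=; rewrite !leqnn.
case/andP => hxy /IH [h1 h2].
have [_ _ p3] := seg_prop (erefl (d x y)).
rewrite size_cat p3 h1.
clear IH; move: hxy h2; rewrite /mono /ord_ok /c1 /c2 /d /ad; case: st => [[] []] /=;
  move=> /andP [a b] /andP [c d']; split; try lia; apply/andP; split; lia.
Qed.

Lemma walk_d x p : path e x p -> forall t t', t <= t' <= size p ->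
  d (nth x (x :: p) t) (nth x (x :: p) t') <= t' - t.
Proof.
move=> /(pathP x) hp t t'; elim: t' => [|t' IH].
  by move=> /andP [h _]; move: h; rewrite leqn0 => /eqP ->; rewrite /d /ad; lia.
move=> /andP [h1 h2].
case: (ltngtP t t'.+1) h1 => // [lt _|eq _]; last by rewrite eq /d /ad; lia.
have := IH (_ : t <= t' <= size p); rewrite -ltnS lt /=.
have := hp t' h2; rewrite -/(nth x (x :: p) t'.+1) => /e_d.
move: (nth x (x :: p) t) (nth x (x :: p) t') (nth x (x :: p) t'.+1) => a b c.
rewrite /d /ad => h h'; have {}h' := h' (ltnW h2); lia.
Qed.

Lemma walk_bound x q : path e x q -> d x (last x q) <= size q.
Proof.
move=> hq; have := walk_d hq (_ : 0 <= size q <= size q).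
by rewrite leqnn /= subn0 (last_nth x) => ->.
Qed.

Lemma stair_geo st x ps : path (mono st) x ps -> geodesic e x (stair x ps).
Proof.
move=> hm; have [p1 p2] := stair_path x ps; have [s1 _] := stair_size hm.
split=> // q hq hl; rewrite s1 -p2 -hl; exact: walk_bound.
Qed.

Lemma geo_size x p : geodesic e x p -> size p = d x (last x p).
Proof.
case=> hp hmin; apply/eqP; rewrite eqn_leq walk_bound // andbT.
have [p1 p2 p3] := seg_prop (erefl (d x (last x p))).
by rewrite -[X in _ <= X]p3; apply: hmin.
Qed.

Lemma geo_mono x p : geodesic e x p -> forall t t', t <= t' <= size p ->
  mono ((c1 x <= c1 (last x p)), (c2 x <= c2 (last x p)))
       (nth x (x :: p) t) (nth x (x :: p) t').
Proof.
move=> g t t' /andP [h1 h2].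
have hs := geo_size g; have hp := g.1.
have A := walk_d hp (_ : 0 <= t <= size p).
have B := walk_d hp (_ : t <= t' <= size p).
have C := walk_d hp (_ : t' <= size p <= size p).
rewrite h1 h2 (leq_trans h1 h2) leqnn /= in A B C.
have {A B C} := conj (A isT) (conj (B isT) (C isT)).
rewrite -(last_nth x) /= subn0 hs.
rewrite /mono /ord_ok /c1 /c2 /=.
rewrite hs in h2; move: h2.
move: (nth x (x :: p) t) (nth x (x :: p) t') (last x p) => a b c.
rewrite /d /= => h2 -[h3 [h4 h5]].
have [[k1 k1'] [k2 k2']] := mono_aux h1 h2 h3 h4 h5.
case: (leqP x.1 c.1) => ?; case: (leqP x.2 c.2) => ? /=; apply/andP; split.
all: first [apply: k1 | apply: k1' | apply: k2 | apply: k2']; first [done | exact: ltnW].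
Qed.

End Grid.


Lemma sum_le n m (f : 'I_n -> nat) (Z : {set 'I_n}) :
  (forall i, i \in Z -> f i = 0) -> (forall i, f i <= m) ->
  \sum_i f i <= m * (n - #|Z|).
Proof.
move=> hz hm.
rewrite (bigID (fun i => i \in Z)) /= big1 ?add0n; last by move=> i /hz.
apply: (@leq_trans (\sum_(i | i \notin Z) m)); first by apply: leq_sum.
rewrite (eq_bigl (fun i => i \in ~: Z)); last by move=> i; rewrite inE.
rewrite sum_nat_const.
have -> : #|~: Z| = n - #|Z|.
  by have := cardsC Z; rewrite card_ord; lia.
by rewrite mulnC.
Qed.

Lemma sum_lt n m (f : 'I_n -> nat) (Z : {set 'I_n}) i2 :
  (forall i, i \in Z -> f i = 0) -> (forall i, f i <= m) ->
  i2 \notin Z -> f i2 < m ->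
  \sum_i f i < m * (n - #|Z|).
Proof.
move=> hz hm hi2 hf.
have := @sum_le n m (fun i => f i + (i == i2)) Z.
have -> : \sum_i (f i + (i == i2)) = \sum_i f i + 1.
  rewrite big_split /=; congr (_ + _).
  rewrite (bigD1 i2) //= eqxx big1 ?addn0 // => i /negPf -> //.
rewrite addn1 => h; apply: h.
  move=> i hi; rewrite hz //; case: eqP => // E; by rewrite -E hi in hi2.
move=> i; case: eqP => [->|_]; by rewrite ?addn1 ?addn0.
Qed.

Lemma sum_interior n m : 2 <= n ->
  \sum_(i < n) (if (0 < i) && (i < n.-1) then m else 0) = m * (n - 2).
Proof.
case: n => [|[|n]] // _.
rewrite -(big_mkord xpredT (fun i => if (0 < i) && (i < n.+2.-1) then m else 0)).
rewrite big_nat_recl // big_nat_recr //=.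
rewrite ltnn addn0 add0n.
rewrite (eq_big_nat _ _ (F2 := fun _ => m)); last by move=> i /andP [_ h]; rewrite ltnS h.
by rewrite sum_nat_const_nat subn0 mulnC subn2.
Qed.



Lemma pair_eqP' r s (u v : 'I_r * 'I_s) : u = v <-> (u.1 = v.1 :> nat /\ u.2 = v.2 :> nat).
Proof.
split=> [->//|[h1 h2]]. case: u v h1 h2 => [a b] [c d'] /= h1 h2.
by rewrite (val_inj h1) (val_inj h2).
Qed.


Lemma sort3 (a b c : nat) : a != b -> b != c -> c != a ->
  (a < b /\ b < c) \/ (a < c /\ c < b) \/ (b < a /\ a < c) \/ (b < c /\ c < a) \/
  (c < a /\ a < b) \/ (c < b /\ b < a).
Proof. move=> h1 h2 h3. lia. Qed.

Lemma ar1 a b s : a < 1 -> s.-2 <= b -> b.+1 < s -> a = 0 /\ b = s.-2.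
Proof. lia. Qed.

Section Count.
Variables r s : nat.
Hypotheses (hr : 5 <= r) (hs : 5 <= s).
Notation T := ('I_r * 'I_s)%type.
Variables H V : {set T}.
Hypothesis hH : forall x, x \in H -> (c2 x).+1 < s.
Hypothesis hV : forall x, x \in V -> (c1 x).+1 < r.
Hypothesis N1 : forall x y z, x \in H -> y \in H -> z \in H ->
  c1 x = c1 y  -> c1 y = c1 z  -> c2 x < c2 y -> c2 y < c2 z -> False.
Hypothesis N1v : forall x y z, x \in V -> y \in V -> z \in V ->
  c2 x = c2 y  -> c2 y = c2 z  -> c1 x < c1 y -> c1 y < c1 z -> False.
Hypothesis N2 : forall x y w, x \in H -> y \in H -> w \in V ->
  c1 x = c1 y  -> c2 x < c2 y -> (c2 w <= c2 x \/ c2 y < c2 w) -> False.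
Hypothesis N2v : forall x y w, x \in V -> y \in V -> w \in H ->
  c2 x = c2 y  -> c1 x < c1 y -> (c1 w <= c1 x \/ c1 y < c1 w) -> False.
Hypothesis N5 : forall x y h w, x \in V -> y \in V -> h \in H -> w \in V ->
  c2 x = c2 y  -> c1 x < c1 h -> c1 h <= c1 y ->
  (c2 x <= c2 h /\ c2 h < c2 w \/ c2 h < c2 x /\ c2 w <= c2 h) -> False.
Hypothesis N5v : forall x y w h, x \in H -> y \in H -> w \in V -> h \in H ->
  c1 x = c1 y  -> c2 x < c2 w -> c2 w <= c2 y ->
  (c1 x <= c1 w /\ c1 w < c1 h \/ c1 w < c1 x /\ c1 h <= c1 w) -> False.

Definition Hstar : {set T} :=
  [set x : T | (0 < c1 x < r.-1) && ((c2 x == 0 ) || (c2 x == s.-2 ))].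
Definition Vstar : {set T} :=
  [set x : T | (0 < c2 x < s.-1) && ((c1 x == 0 ) || (c1 x == r.-2 ))].

Definition row (i : 'I_r) := [set x in H | c1 x == i].
Definition col (j : 'I_s) := [set x in V | c2 x == j].

Lemma cardH : #|H| = \sum_i #|row i|.
Proof.
rewrite -sum1_card (partition_big (fun x : T => x.1) xpredT) //=.
apply: eq_bigr => i _; rewrite -sum1_card; apply: eq_bigl => x; by rewrite !inE.
Qed.

Lemma cardV : #|V| = \sum_j #|col j|.
Proof.
rewrite -sum1_card (partition_big (fun x : T => x.2) xpredT) //=.
apply: eq_bigr => i _; rewrite -sum1_card; apply: eq_bigl => x; by rewrite !inE.
Qed.

Lemma neq2 (x y : T) : x != y -> c1 x = c1 y -> c2 x != c2 y.
Proof.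
move=> xy h; apply/negP => /eqP h2; move/negP: xy; apply; apply/eqP; exact/pair_eqP'.
Qed.
Lemma neq1 (x y : T) : x != y -> c2 x = c2 y -> c1 x != c1 y.
Proof.
move=> xy h; apply/negP => /eqP h2; move/negP: xy; apply; apply/eqP; exact/pair_eqP'.
Qed.

Lemma row_le2 i : #|row i| <= 2.
Proof.
rewrite leqNgt; apply/negP => /card_gt2P [x [y [z [[hx hy hz] [xy yz zx]]]]].
move: hx hy hz; rewrite !inE => /andP [hx /eqP ex] /andP [hy /eqP ey] /andP [hz /eqP ez].
have e1 : c1 x = c1 y by rewrite ex ey.
have e2 : c1 y = c1 z by rewrite ez ey.
have d1 := neq2 xy e1; have d2 := neq2 yz e2.
have d3 := neq2 zx (esym (etrans e1 e2)).
case: (sort3 d1 d2 d3) => [[h1 h2]|[[h1 h2]|[[h1 h2]|[[h1 h2]|[[h1 h2]|[h1 h2]]]]]].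
- by apply: (N1 hx hy hz) => //; lia.
- by apply: (N1 hx hz hy) => //; lia.
- by apply: (N1 hy hx hz) => //; lia.
- by apply: (N1 hy hz hx) => //; lia.
- by apply: (N1 hz hx hy) => //; lia.
- by apply: (N1 hz hy hx) => //; lia.
Qed.

Lemma col_le2 j : #|col j| <= 2.
Proof.
rewrite leqNgt; apply/negP => /card_gt2P [x [y [z [[hx hy hz] [xy yz zx]]]]].
move: hx hy hz; rewrite !inE => /andP [hx /eqP ex] /andP [hy /eqP ey] /andP [hz /eqP ez].
have e1 : c2 x = c2 y by rewrite ex ey.
have e2 : c2 y = c2 z by rewrite ez ey.
have d1 := neq1 xy e1; have d2 := neq1 yz e2.
have d3 := neq1 zx (esym (etrans e1 e2)).
case: (sort3 d1 d2 d3) => [[h1 h2]|[[h1 h2]|[[h1 h2]|[[h1 h2]|[[h1 h2]|[h1 h2]]]]]].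
- by apply: (N1v hx hy hz) => //; lia.
- by apply: (N1v hx hz hy) => //; lia.
- by apply: (N1v hy hx hz) => //; lia.
- by apply: (N1v hy hz hx) => //; lia.
- by apply: (N1v hz hx hy) => //; lia.
- by apply: (N1v hz hy hx) => //; lia.
Qed.

Lemma row2 i : #|row i| = 2 -> exists x y, [/\ x \in H, y \in H, c1 x = i /\ c1 y = i,
   c2 x < c2 y & forall z, z \in row i -> z = x \/ z = y].
Proof.
move/eqP/cards2P => [x [y [xy E]]].
have : x \in row i by rewrite E !inE eqxx.
have : y \in row i by rewrite E !inE eqxx orbT.
rewrite !inE => /andP [hy /eqP ey] /andP [hx /eqP ex].
have d := neq2 xy (etrans ex (esym ey)).
have mem z : z \in row i -> z = x \/ z = y by rewrite E !inE => /orP [/eqP|/eqP]; tauto.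
case: (ltngtP (c2 x) (c2 y)) => h; last by rewrite h eqxx in d.
- by exists x, y; split.
- by exists y, x; split => // z /mem; tauto.
Qed.

Lemma col2 j : #|col j| = 2 -> exists x y, [/\ x \in V, y \in V, c2 x = j /\ c2 y = j,
   c1 x < c1 y & forall z, z \in col j -> z = x \/ z = y].
Proof.
move/eqP/cards2P => [x [y [xy E]]].
have : x \in col j by rewrite E !inE eqxx.
have : y \in col j by rewrite E !inE eqxx orbT.
rewrite !inE => /andP [hy /eqP ey] /andP [hx /eqP ex].
have d := neq1 xy (etrans ex (esym ey)).
have mem z : z \in col j -> z = x \/ z = y by rewrite E !inE => /orP [/eqP|/eqP]; tauto.
case: (ltngtP (c1 x) (c1 y)) => h; last by rewrite h eqxx in d.
- by exists x, y; split.
- by exists y, x; split => // z /mem; tauto.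
Qed.

Lemma row_zero (i : 'I_r) : (forall z, z \in H -> c1 z != i) -> #|row i| = 0.
Proof. move=> h; apply: eq_card0 => z; rewrite !inE; apply/negP => /andP [/h /negP hz ez]; exact: hz. Qed.
Lemma col_zero (j : 'I_s) : (forall z, z \in V -> c2 z != j) -> #|col j| = 0.
Proof. move=> h; apply: eq_card0 => z; rewrite !inE; apply/negP => /andP [/h /negP hz ez]; exact: hz. Qed.

Lemma count_main : #|H| + #|V| <= 2*r + 2*s - 8 /\
  (#|H| + #|V| = 2*r + 2*s - 8 -> H = Hstar /\ V = Vstar).
Proof.
have hr0 : 0 < r by lia. have hr1 : r.-1 < r by lia.
have hs0 : 0 < s by lia. have hs1 : s.-1 < s by lia.
pose o0 : 'I_r := Ordinal hr0. pose om : 'I_r := Ordinal hr1.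
pose p0 : 'I_s := Ordinal hs0. pose pm : 'I_s := Ordinal hs1.
have cZr : #|[set o0; om]| = 2.
  rewrite cards2; case: eqP => // /(congr1 val) /=; lia.
have cZs : #|[set p0; pm]| = 2.
  rewrite cards2; case: eqP => // /(congr1 val) /=; lia.
have inZr i : i \in [set o0; om] -> i = 0 :> nat \/ i = r.-1 :> nat.
  by rewrite !inE => /orP [/eqP ->|/eqP ->]; [left|right].
have inZs j : j \in [set p0; pm] -> j = 0 :> nat \/ j = s.-1 :> nat.
  by rewrite !inE => /orP [/eqP ->|/eqP ->]; [left|right].
have notZr (i : 'I_r) : 0 < i < r.-1 -> i \notin [set o0; om].
  move=> h; apply/negP => /inZr; lia.
have notZs (j : 'I_s) : 0 < j < s.-1 -> j \notin [set p0; pm].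
  move=> h; apply/negP => /inZs; lia.
have sumH := cardH; have sumV := cardV.
case: (boolP [exists i, #|row i| == 2]) => [/existsP [i0 /eqP hi0] | nR2];
case: (boolP [exists j, #|col j| == 2]) => [/existsP [j0 /eqP hj0] | nC2].
-
  have [x [y [hx hy [ex ey] xy _]]] := row2 hi0.
  have [x' [y' [hx' hy' [ex' ey'] xy' _]]] := col2 hj0.
  have Vr w : w \in V -> c2 x < c2 w /\ c2 w <= c2 y.
    move=> hw; have := N2 hx hy hw; have := hH hy; lia.
  have Hr h : h \in H -> c1 x' < c1 h /\ c1 h <= c1 y'.
    move=> hh; have := N2v hx' hy' hh; have := hV hy'; lia.
  have bH : #|H| <= 2 * (r - 2).
    have := @sum_le r 2 (fun i => #|row i|) [set o0; om]; rewrite cZr sumH; apply; last by move=> i; exact: row_le2.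
    move=> i /inZr hi; apply: row_zero => z /Hr; have := hV hy'; lia.
  have bV : #|V| <= 2 * (s - 2).
    have := @sum_le s 2 (fun i => #|col i|) [set p0; pm]; rewrite cZs sumV; apply; last by move=> i; exact: col_le2.
    move=> j /inZs hj; apply: col_zero => z /Vr; have := hH hy; lia.
  split; first lia.
  move=> heq.
  have eH : #|H| = 2 * (r - 2) by lia.
  have eV : #|V| = 2 * (s - 2) by lia.
  have full_row i : i \notin [set o0; om] -> #|row i| = 2.
    move=> hi; apply/eqP; rewrite eqn_leq row_le2 /= ltnNge; apply/negP => hlt.
    have : \sum_i #|row i| < 2 * (r - #|[set o0; om]|).
      apply: (sum_lt (i2:=i)) => //; last by move=> i'; exact: row_le2.
      move=> i' /inZr hi'; apply: row_zero => z /Hr; have := hV hy'; lia.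
    by rewrite cZr -sumH eH ltnn.
  have full_col j : j \notin [set p0; pm] -> #|col j| = 2.
    move=> hj; apply/eqP; rewrite eqn_leq col_le2 /= ltnNge; apply/negP => hlt.
    have : \sum_j #|col j| < 2 * (s - #|[set p0; pm]|).
      apply: (sum_lt (i2:=j)) => //; last by move=> j'; exact: col_le2.
      move=> j' /inZs hj'; apply: col_zero => z /Vr; have := hH hy; lia.
    by rewrite cZs -sumV eV ltnn.
  have hq1 : 1 < s by lia. have hq2 : s.-2 < s by lia.
  have hk1 : 1 < r by lia. have hk2 : r.-2 < r by lia.
  have nq1 : Ordinal hq1 \notin [set p0; pm] by apply: notZs => /=; lia.
  have nq2 : Ordinal hq2 \notin [set p0; pm] by apply: notZs => /=; lia.
  have nk1 : Ordinal hk1 \notin [set o0; om] by apply: notZr => /=; lia.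
  have nk2 : Ordinal hk2 \notin [set o0; om] by apply: notZr => /=; lia.
  have [w1 [_ [hw1 _ [ew1 _] _ _]]] := col2 (full_col _ nq1).
  have [w2 [_ [hw2 _ [ew2 _] _ _]]] := col2 (full_col _ nq2).
  have [h1 [_ [hh1 _ [eh1 _] _ _]]] := row2 (full_row _ nk1).
  have [h2 [_ [hh2 _ [eh2 _] _ _]]] := row2 (full_row _ nk2).
  rewrite /= in ew1 ew2 eh1 eh2.
  have rowS i : i \notin [set o0; om] -> exists x1 y1, [/\ x1 \in H, y1 \in H,
      c1 x1 = i /\ c1 y1 = i, c2 x1 = 0 /\ c2 y1 = s.-2 &
      forall z, z \in row i -> z = x1 \/ z = y1].
    move=> hi; have [x1 [y1 [hx1 hy1 [e1 e2] lt mem]]] := row2 (full_row _ hi).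
    exists x1, y1; split => //.
    have ee : c1 x1 = c1 y1 by rewrite e1 e2.
    have a1 : c2 x1 < 1.
      rewrite -ew1 ltnNge; apply/negP => h; exact: (N2 hx1 hy1 hw1 ee lt (or_introl h)).
    have a2 : s.-2 <= c2 y1.
      rewrite -ew2 leqNgt; apply/negP => h; exact: (N2 hx1 hy1 hw2 ee lt (or_intror h)).
    exact: ar1 a1 a2 (hH hy1).
  have colS j : j \notin [set p0; pm] -> exists x1 y1, [/\ x1 \in V, y1 \in V,
      c2 x1 = j /\ c2 y1 = j, c1 x1 = 0 /\ c1 y1 = r.-2 &
      forall z, z \in col j -> z = x1 \/ z = y1].
    move=> hj; have [x1 [y1 [hx1 hy1 [e1 e2] lt mem]]] := col2 (full_col _ hj).
    exists x1, y1; split => //.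
    have ee : c2 x1 = c2 y1 by rewrite e1 e2.
    have a1 : c1 x1 < 1.
      rewrite -eh1 ltnNge; apply/negP => h; exact: (N2v hx1 hy1 hh1 ee lt (or_introl h)).
    have a2 : r.-2 <= c1 y1.
      rewrite -eh2 leqNgt; apply/negP => h; exact: (N2v hx1 hy1 hh2 ee lt (or_intror h)).
    exact: ar1 a1 a2 (hV hy1).
  clear heq eH eV bH bV sumH sumV cZr cZs full_row full_col nq1 nq2 nk1 nk2 hq1 hq2 hk1 hk2
    ew1 ew2 eh1 eh2 hw1 hw2 hh1 hh2 w1 w2 h1 h2 inZr inZs.
  split.
    apply/setP => z; rewrite /Hstar !inE.
    have cz1 : c1 z = z.1 by []. have cz2 : c2 z = z.2 by [].
    case hz: (z \in H).
      have [lo hi'] := Hr z hz.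
      have hi : z.1 \notin [set o0; om] by apply: notZr; have := hV hy'; lia.
      have [x1 [y1 [_ _ [e1 e2] [f1 f2] mem]]] := rowS _ hi.
      have : z \in row z.1 by rewrite !inE hz /= eqxx.
      case/mem => ->; move: (hV hy') => hvy; apply/esym; apply/andP; split; try lia.
    apply/esym/negP => /andP [hint hcol].
    have hi : z.1 \notin [set o0; om] by apply: notZr; lia.
    have [x1 [y1 [hx1 hy1 [e1 e2] [f1 f2] mem]]] := rowS _ hi.
    move/orP: hcol => [/eqP hc|/eqP hc].
      have : z = x1 by apply/pair_eqP'; change (c1 z = c1 x1 /\ c2 z = c2 x1); rewrite e1 hc f1; split.
      by move=> E; rewrite E hx1 in hz.
    have : z = y1 by apply/pair_eqP'; change (c1 z = c1 y1 /\ c2 z = c2 y1); rewrite e2 hc f2; split.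
    by move=> E; rewrite E hy1 in hz.
  apply/setP => z; rewrite /Vstar !inE.
  have cz1 : c1 z = z.1 by []. have cz2 : c2 z = z.2 by [].
  case hz: (z \in V).
    have [lo hi'] := Vr z hz.
    have hi : z.2 \notin [set p0; pm] by apply: notZs; have := hH hy; lia.
    have [x1 [y1 [_ _ [e1 e2] [f1 f2] mem]]] := colS _ hi.
    have : z \in col z.2 by rewrite !inE hz /= eqxx.
    case/mem => ->; move: (hH hy) => hvy; apply/esym; apply/andP; split; try lia.
  apply/esym/negP => /andP [hint hcol].
  have hi : z.2 \notin [set p0; pm] by apply: notZs; lia.
  have [x1 [y1 [hx1 hy1 [e1 e2] [f1 f2] mem]]] := colS _ hi.
  move/orP: hcol => [/eqP hc|/eqP hc].
    have : z = x1 by apply/pair_eqP'; change (c1 z = c1 x1 /\ c2 z = c2 x1); rewrite e1 hc f1; split.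
    by move=> E; rewrite E hx1 in hz.
  have : z = y1 by apply/pair_eqP'; change (c1 z = c1 y1 /\ c2 z = c2 y1); rewrite e2 hc f2; split.
  by move=> E; rewrite E hy1 in hz.
-
  move/existsPn: nC2 => nC2.
  have c1b j : #|col j| <= 1 by have := col_le2 j; have := nC2 j; lia.
  have [x [y [hx hy [ex ey] xy _]]] := row2 hi0.
  have Vr w : w \in V -> c2 x < c2 w /\ c2 w <= c2 y.
    move=> hw; have := N2 hx hy hw; have := hH hy; lia.
  have bV : #|V| <= 1 * (s - 2).
    have := @sum_le s 1 (fun i => #|col i|) [set p0; pm]; rewrite cZs sumV; apply; last by move=> j; exact: c1b.
    move=> j /inZs hj; apply: col_zero => z /Vr; have := hH hy; lia.
  case: (boolP (#|V| == 0)) => h0.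
    have bH : #|H| <= 2 * (r - #|(set0 : {set 'I_r})|).
      have := @sum_le r 2 (fun i => #|row i|) set0; rewrite -sumH; apply; last by move=> i; exact: row_le2.
      by move=> i; rewrite inE.
    rewrite cards0 in bH; split; lia.
  move: h0; rewrite -lt0n => /card_gt0P [w hw].
  have [lo hi] := Vr w hw.
  have hwr := hV hw.
  case: (leqP (c1 x) (c1 w)) => hc.
    have bH : #|H| <= 2 * (r - #|[set om]|).
      have := @sum_le r 2 (fun i => #|row i|) [set om]; rewrite -sumH; apply; last by move=> i; exact: row_le2.
      move=> i; rewrite inE => /eqP ->; apply: row_zero => h hh; apply/negP => /eqP he.
      apply: (N5v hx hy hw hh) => //; first lia; left; split => //; rewrite he /=; lia.
    rewrite cards1 in bH; split; lia.
  have bH : #|H| <= 2 * (r - #|[set o0]|).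
    have := @sum_le r 2 (fun i => #|row i|) [set o0]; rewrite -sumH; apply; last by move=> i; exact: row_le2.
    move=> i; rewrite inE => /eqP ->; apply: row_zero => h hh; apply/negP => /eqP he.
    apply: (N5v hx hy hw hh) => //; first lia; right; split => //; rewrite he /=; lia.
  rewrite cards1 in bH; split; lia.
-
  move/existsPn: nR2 => nR2.
  have r1b i : #|row i| <= 1 by have := row_le2 i; have := nR2 i; lia.
  have [x [y [hx hy [ex ey] xy _]]] := col2 hj0.
  have Hr w : w \in H -> c1 x < c1 w /\ c1 w <= c1 y.
    move=> hw; have := N2v hx hy hw; have := hV hy; lia.
  have bH : #|H| <= 1 * (r - 2).
    have := @sum_le r 1 (fun i => #|row i|) [set o0; om]; rewrite cZr sumH; apply; last by move=> i; exact: r1b.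
    move=> i /inZr hi; apply: row_zero => z /Hr; have := hV hy; lia.
  case: (boolP (#|H| == 0)) => h0.
    have bV : #|V| <= 2 * (s - #|(set0 : {set 'I_s})|).
      have := @sum_le s 2 (fun i => #|col i|) set0; rewrite -sumV; apply; last by move=> i; exact: col_le2.
      by move=> i; rewrite inE.
    rewrite cards0 in bV; split; lia.
  move: h0; rewrite -lt0n => /card_gt0P [w hw].
  have [lo hi] := Hr w hw.
  have hwr := hH hw.
  case: (leqP (c2 x) (c2 w)) => hc.
    have bV : #|V| <= 2 * (s - #|[set pm]|).
      have := @sum_le s 2 (fun i => #|col i|) [set pm]; rewrite -sumV; apply; last by move=> i; exact: col_le2.
      move=> i; rewrite inE => /eqP ->; apply: col_zero => h hh; apply/negP => /eqP he.
      apply: (N5 hx hy hw hh) => //; first lia; left; split => //; rewrite he /=; lia.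
    rewrite cards1 in bV; split; lia.
  have bV : #|V| <= 2 * (s - #|[set p0]|).
    have := @sum_le s 2 (fun i => #|col i|) [set p0]; rewrite -sumV; apply; last by move=> i; exact: col_le2.
    move=> i; rewrite inE => /eqP ->; apply: col_zero => h hh; apply/negP => /eqP he.
    apply: (N5 hx hy hw hh) => //; first lia; right; split => //; rewrite he /=; lia.
  rewrite cards1 in bV; split; lia.
-
  move/existsPn: nR2 => nR2; move/existsPn: nC2 => nC2.
  have r1b i : #|row i| <= 1 by have := row_le2 i; have := nR2 i; lia.
  have c1b j : #|col j| <= 1 by have := col_le2 j; have := nC2 j; lia.
  have bH : #|H| <= 1 * (r - #|(set0 : {set 'I_r})|).
    have := @sum_le r 1 (fun i => #|row i|) set0; rewrite -sumH; apply; last by move=> i; exact: r1b.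
    by move=> i; rewrite inE.
  have bV : #|V| <= 1 * (s - #|(set0 : {set 'I_s})|).
    have := @sum_le s 1 (fun i => #|col i|) set0; rewrite -sumV; apply; last by move=> i; exact: c1b.
    by move=> i; rewrite inE.
  rewrite cards0 in bH bV; split; lia.
Qed.


End Count.


Section Main.
Variables r s : nat.
Hypotheses (hr : 5 <= r) (hs : 5 <= s).
Notation T := ('I_r * 'I_s)%type.
Notation e := (grid_rel r s).

Definition hx (x : T) : T := (x.1, insubd x.2 x.2.+1).
Definition vx (x : T) : T := (insubd x.1 x.1.+1, x.2).
Definition hedge (x : T) : {set T} := [set x; hx x].
Definition vedge (x : T) : {set T} := [set x; vx x].

Lemma c1hx x : c1 (hx x) = c1 x. Proof. by []. Qed.
Lemma c2vx x : c2 (vx x) = c2 x. Proof. by []. Qed.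
Lemma c2hx x : (c2 x).+1 < s -> c2 (hx x) = (c2 x).+1.
Proof. by move=> h; rewrite /c2 /= val_insubd h. Qed.
Lemma c1vx x : (c1 x).+1 < r -> c1 (vx x) = (c1 x).+1.
Proof. by move=> h; rewrite /c1 /= val_insubd h. Qed.

Lemma c_eq (u v : T) : c1 u = c1 v -> c2 u = c2 v -> u = v.
Proof. by move=> h1 h2; apply/pair_eqP'. Qed.

Lemma e_c (u v : T) : e u v ->
  (c2 u = c2 v /\ (c1 u + 1 = c1 v \/ c1 v + 1 = c1 u)) \/
  (c1 u = c1 v /\ (c2 u + 1 = c2 v \/ c2 v + 1 = c2 u)).
Proof. move/e_coords; rewrite /c1 /c2; lia. Qed.

Lemma c_e (u v : T) :
  (c2 u = c2 v /\ (c1 u + 1 = c1 v \/ c1 v + 1 = c1 u)) \/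
  (c1 u = c1 v /\ (c2 u + 1 = c2 v \/ c2 v + 1 = c2 u)) -> e u v.
Proof. move=> h; apply: coords_e; move: h; rewrite /c1 /c2; lia. Qed.

Lemma e_irr (u : T) : e u u -> False.
Proof. move/e_c; lia. Qed.

Lemma e_sym (u v : T) : e u v -> e v u.
Proof. move/e_c => h; apply: c_e; lia. Qed.

Lemma monoE b1 b2 (u v : T) :
  mono (b1, b2) u v = ord_ok b1 (c1 u) (c1 v) && ord_ok b2 (c2 u) (c2 v).
Proof. by []. Qed.
Lemma ord_okT x y : ord_ok true x y = (x <= y). Proof. by []. Qed.
Lemma ord_okF x y : ord_ok false x y = (y <= x). Proof. by []. Qed.

Lemma mono_trans st (a b c : T) : mono st a b -> mono st b c -> mono st a c.
Proof. case: st => [[] []]; rewrite !monoE ?ord_okT ?ord_okF; lia. Qed.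

Lemma neq_edge st (a b c d' : T) : e a b -> e c d' ->
  mono st a b -> mono st b c -> mono st c d' -> [set a; b] != [set c; d'].
Proof.
move=> eab ecd m1 m2 m3; apply/negP => /eqP E.
have : a \in [set c; d'] by rewrite -E set21.
rewrite !inE => /orP [/eqP E'|/eqP E']; subst a; move: (e_c eab) (e_c ecd) m1 m2 m3;
  case: st => [[] []]; rewrite !monoE ?ord_okT ?ord_okF; lia.
Qed.

Lemma we_sub (x y : T) ps :
  {subset walk_edges y (stair y ps) <= walk_edges x (stair x (y :: ps))}.
Proof.
move=> A hA; rewrite /walk_edges /= pairmap_cat mem_cat.
have [_ p2 _] := seg_prop (erefl (d x y)).
by rewrite p2; apply/orP; right.
Qed.

Lemma we_head (x y : T) ps : e x y -> [set x; y] \in walk_edges x (stair x (y :: ps)).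
Proof.
move=> exy; rewrite /walk_edges /= pairmap_cat mem_cat; apply/orP; left.
have [_ p2 _] := seg_prop (erefl (d x y)).
move: p2; rewrite (e_d exy) /= => ->.
by rewrite inE.
Qed.

Lemma chain3 (S' : {set {set T}}) st (a1 b1 a2 b2 a3 b3 : T) : edge_gp_set e S' ->
  [set a1; b1] \in S' -> [set a2; b2] \in S' -> [set a3; b3] \in S' ->
  e a1 b1 -> e a2 b2 -> e a3 b3 ->
  mono st a1 b1 -> mono st b1 a2 -> mono st a2 b2 -> mono st b2 a3 -> mono st a3 b3 -> False.
Proof.
move=> [_ gp] A1 A2 A3 e1 e2 e3 m1 m2 m3 m4 m5.
have hp : path (mono st) a1 [:: b1; a2; b2; a3; b3] by rewrite /= m1 m2 m3 m4 m5.
have := gp _ _ (stair_geo hp).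
have w1 : [set a1; b1] \in walk_edges a1 (stair a1 [:: b1; a2; b2; a3; b3]) := we_head _ e1.
have w2 : [set a2; b2] \in walk_edges a1 (stair a1 [:: b1; a2; b2; a3; b3]).
  by apply: we_sub; apply: we_sub; apply: we_head.
have w3 : [set a3; b3] \in walk_edges a1 (stair a1 [:: b1; a2; b2; a3; b3]).
  by apply: we_sub; apply: we_sub; apply: we_sub; apply: we_sub; apply: we_head.
have d12 := neq_edge e1 e2 m1 m2 m3.
have d23 := neq_edge e2 e3 m3 m4 m5.
have d13 := neq_edge e1 e3 m1 (mono_trans m2 (mono_trans m3 m4)) m5.
rewrite ltnNge => /negP; apply; apply/card_gt2P.
exists [set a1; b1], [set a2; b2], [set a3; b3]; split; first by rewrite !inE A1 A2 A3 w1 w2 w3.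
by rewrite d12 d23 eq_sym d13.
Qed.


Definition Hof (S' : {set {set T}}) : {set T} :=
  [set x : T | ((c2 x).+1 < s) && (hedge x \in S')].
Definition Vof (S' : {set {set T}}) : {set T} :=
  [set x : T | ((c1 x).+1 < r) && (vedge x \in S')].

Lemma itemH S' x : x \in Hof S' -> (c2 x).+1 < s /\ [/\ [set x; hx x] \in S', [set hx x; x] \in S', e x (hx x), e (hx x) x &
  c1 (hx x) = c1 x /\ c2 (hx x) = (c2 x).+1].
Proof.
rewrite inE => /andP [h1 h2]; have c := c2hx h1.
have exy : e x (hx x) by apply: c_e; right; split; [by [] | left; lia].
split => //; split => //; [by rewrite setUC | exact: e_sym].
Qed.

Lemma itemV S' x : x \in Vof S' -> (c1 x).+1 < r /\ [/\ [set x; vx x] \in S', [set vx x; x] \in S', e x (vx x), e (vx x) x &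
  c2 (vx x) = c2 x /\ c1 (vx x) = (c1 x).+1].
Proof.
rewrite inE => /andP [h1 h2]; have c := c1vx h1.
have exy : e x (vx x) by apply: c_e; left; split; [by [] | left; lia].
split => //; split => //; [by rewrite setUC | exact: e_sym].
Qed.

Section Facts.
Variable S' : {set {set T}}.
Hypothesis gp : edge_gp_set e S'.
Notation H := (Hof S').
Notation V := (Vof S').

Lemma fN1 x y z : x \in H -> y \in H -> z \in H ->
  c1 x = c1 y -> c1 y = c1 z -> c2 x < c2 y -> c2 y < c2 z -> False.
Proof.
move=> /itemH [? [m11 m12 m13 m14 [? ?]]] /itemH [? [m21 m22 m23 m24 [? ?]]] /itemH [? [m31 m32 m33 m34 [? ?]]] *.
by apply: (@chain3 S' (true,true) (x) (hx x) (y) (hx y) (z) (hx z) gp) => //; clear m11 m12 m13 m14 m21 m22 m23 m24 m31 m32 m33 m34 gp; rewrite !monoE ?ord_okT ?ord_okF; lia.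
Qed.

Lemma fN1v x y z : x \in V -> y \in V -> z \in V ->
  c2 x = c2 y -> c2 y = c2 z -> c1 x < c1 y -> c1 y < c1 z -> False.
Proof.
move=> /itemV [? [m11 m12 m13 m14 [? ?]]] /itemV [? [m21 m22 m23 m24 [? ?]]] /itemV [? [m31 m32 m33 m34 [? ?]]] *.
by apply: (@chain3 S' (true,true) (x) (vx x) (y) (vx y) (z) (vx z) gp) => //; clear m11 m12 m13 m14 m21 m22 m23 m24 m31 m32 m33 m34 gp; rewrite !monoE ?ord_okT ?ord_okF; lia.
Qed.

Lemma fN2 x y w : x \in H -> y \in H -> w \in V ->
  c1 x = c1 y -> c2 x < c2 y -> c2 w <= c2 x \/ c2 y < c2 w -> False.
Proof.
move=> /itemH [? [m11 m12 m13 m14 [? ?]]] /itemH [? [m21 m22 m23 m24 [? ?]]] /itemV [? [m31 m32 m33 m34 [? ?]]] h1 h2 [h3|h3].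
  case: (leqP (c1 w).+1 (c1 x)) => h4.
    by apply: (@chain3 S' (true,true) (w) (vx w) (x) (hx x) (y) (hx y) gp) => //; clear m11 m12 m13 m14 m21 m22 m23 m24 m31 m32 m33 m34 gp; rewrite !monoE ?ord_okT ?ord_okF; lia.
  by apply: (@chain3 S' (false,true) (vx w) (w) (x) (hx x) (y) (hx y) gp) => //; clear m11 m12 m13 m14 m21 m22 m23 m24 m31 m32 m33 m34 gp; rewrite !monoE ?ord_okT ?ord_okF; lia.
case: (leqP (c1 y) (c1 w)) => h4.
  by apply: (@chain3 S' (true,true) (x) (hx x) (y) (hx y) (w) (vx w) gp) => //; clear m11 m12 m13 m14 m21 m22 m23 m24 m31 m32 m33 m34 gp; rewrite !monoE ?ord_okT ?ord_okF; lia.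
by apply: (@chain3 S' (false,true) (x) (hx x) (y) (hx y) (vx w) (w) gp) => //; clear m11 m12 m13 m14 m21 m22 m23 m24 m31 m32 m33 m34 gp; rewrite !monoE ?ord_okT ?ord_okF; lia.
Qed.

Lemma fN2v x y w : x \in V -> y \in V -> w \in H ->
  c2 x = c2 y -> c1 x < c1 y -> c1 w <= c1 x \/ c1 y < c1 w -> False.
Proof.
move=> /itemV [? [m11 m12 m13 m14 [? ?]]] /itemV [? [m21 m22 m23 m24 [? ?]]] /itemH [? [m31 m32 m33 m34 [? ?]]] h1 h2 [h3|h3].
  case: (leqP (c2 w).+1 (c2 x)) => h4.
    by apply: (@chain3 S' (true,true) (w) (hx w) (x) (vx x) (y) (vx y) gp) => //; clear m11 m12 m13 m14 m21 m22 m23 m24 m31 m32 m33 m34 gp; rewrite !monoE ?ord_okT ?ord_okF; lia.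
  by apply: (@chain3 S' (true,false) (hx w) (w) (x) (vx x) (y) (vx y) gp) => //; clear m11 m12 m13 m14 m21 m22 m23 m24 m31 m32 m33 m34 gp; rewrite !monoE ?ord_okT ?ord_okF; lia.
case: (leqP (c2 y) (c2 w)) => h4.
  by apply: (@chain3 S' (true,true) (x) (vx x) (y) (vx y) (w) (hx w) gp) => //; clear m11 m12 m13 m14 m21 m22 m23 m24 m31 m32 m33 m34 gp; rewrite !monoE ?ord_okT ?ord_okF; lia.
by apply: (@chain3 S' (true,false) (x) (vx x) (y) (vx y) (hx w) (w) gp) => //; clear m11 m12 m13 m14 m21 m22 m23 m24 m31 m32 m33 m34 gp; rewrite !monoE ?ord_okT ?ord_okF; lia.
Qed.

Lemma fN5 x y h w : x \in V -> y \in V -> h \in H -> w \in V ->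
  c2 x = c2 y -> c1 x < c1 h -> c1 h <= c1 y ->
  c2 x <= c2 h /\ c2 h < c2 w \/ c2 h < c2 x /\ c2 w <= c2 h -> False.
Proof.
move=> /itemV [? [m11 m12 m13 m14 [? ?]]] /itemV [? [m21 m22 m23 m24 [? ?]]] /itemH [? [m31 m32 m33 m34 [? ?]]] /itemV [? [m41 m42 m43 m44 [? ?]]] h1 h2 h3 [[h4 h5]|[h4 h5]].
  case: (leqP (c1 h) (c1 w)) => h6.
    by apply: (@chain3 S' (true,true) (x) (vx x) (h) (hx h) (w) (vx w) gp) => //; clear m11 m12 m13 m14 m21 m22 m23 m24 m31 m32 m33 m34 m41 m42 m43 m44 gp; rewrite !monoE ?ord_okT ?ord_okF; lia.
  by apply: (@chain3 S' (false,true) (vx y) (y) (h) (hx h) (vx w) (w) gp) => //; clear m11 m12 m13 m14 m21 m22 m23 m24 m31 m32 m33 m34 m41 m42 m43 m44 gp; rewrite !monoE ?ord_okT ?ord_okF; lia.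
case: (leqP (c1 h) (c1 w)) => h6.
  by apply: (@chain3 S' (true,false) (x) (vx x) (hx h) (h) (w) (vx w) gp) => //; clear m11 m12 m13 m14 m21 m22 m23 m24 m31 m32 m33 m34 m41 m42 m43 m44 gp; rewrite !monoE ?ord_okT ?ord_okF; lia.
by apply: (@chain3 S' (false,false) (vx y) (y) (hx h) (h) (vx w) (w) gp) => //; clear m11 m12 m13 m14 m21 m22 m23 m24 m31 m32 m33 m34 m41 m42 m43 m44 gp; rewrite !monoE ?ord_okT ?ord_okF; lia.
Qed.

Lemma fN5v x y w h : x \in H -> y \in H -> w \in V -> h \in H ->
  c1 x = c1 y -> c2 x < c2 w -> c2 w <= c2 y ->
  c1 x <= c1 w /\ c1 w < c1 h \/ c1 w < c1 x /\ c1 h <= c1 w -> False.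
Proof.
move=> /itemH [? [m11 m12 m13 m14 [? ?]]] /itemH [? [m21 m22 m23 m24 [? ?]]] /itemV [? [m31 m32 m33 m34 [? ?]]] /itemH [? [m41 m42 m43 m44 [? ?]]] h1 h2 h3 [[h4 h5]|[h4 h5]].
  case: (leqP (c2 w) (c2 h)) => h6.
    by apply: (@chain3 S' (true,true) (x) (hx x) (w) (vx w) (h) (hx h) gp) => //; clear m11 m12 m13 m14 m21 m22 m23 m24 m31 m32 m33 m34 m41 m42 m43 m44 gp; rewrite !monoE ?ord_okT ?ord_okF; lia.
  by apply: (@chain3 S' (true,false) (hx y) (y) (w) (vx w) (hx h) (h) gp) => //; clear m11 m12 m13 m14 m21 m22 m23 m24 m31 m32 m33 m34 m41 m42 m43 m44 gp; rewrite !monoE ?ord_okT ?ord_okF; lia.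
case: (leqP (c2 w) (c2 h)) => h6.
  by apply: (@chain3 S' (false,true) (x) (hx x) (vx w) (w) (h) (hx h) gp) => //; clear m11 m12 m13 m14 m21 m22 m23 m24 m31 m32 m33 m34 m41 m42 m43 m44 gp; rewrite !monoE ?ord_okT ?ord_okF; lia.
by apply: (@chain3 S' (false,false) (hx y) (y) (vx w) (w) (hx h) (h) gp) => //; clear m11 m12 m13 m14 m21 m22 m23 m24 m31 m32 m33 m34 m41 m42 m43 m44 gp; rewrite !monoE ?ord_okT ?ord_okF; lia.
Qed.

End Facts.

Definition Sg (a b : T) : bool :=
  ((c1 a == c1 b) && (0 < c1 a < r.-1) &&
     ((c2 a + c2 b == 1) || (c2 a + c2 b == s.-2 + s.-1))) ||
  ((c2 a == c2 b) && (0 < c2 a < s.-1) &&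
     ((c1 a + c1 b == 1) || (c1 a + c1 b == r.-2 + r.-1))).

Definition Sset : {set {set T}} :=
  [set A | [exists a, exists b, e a b && Sg a b && (A == [set a; b])]].

Lemma cb (a : T) : c1 a < r /\ c2 a < s.
Proof. exact: (conj (ltn_ord a.1) (ltn_ord a.2)). Qed.

Lemma Sg_sym a b : Sg a b -> Sg b a.
Proof. rewrite /Sg; lia. Qed.

Lemma Lbd (a b : T) : e a b -> Sg a b ->
  0 < c1 a + c1 b < 2 * r.-1 /\ 0 < c2 a + c2 b < 2 * s.-1.
Proof.
move/e_c => h; have := cb a; have := cb b; rewrite /Sg => ? ? hs'. lia.
Qed.

Lemma Lmid (a b : T) : Sg a b ->
  c1 a = 0 \/ c1 b = 0 \/ c1 a = r.-1 \/ c1 b = r.-1 \/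
  c2 a = 0 \/ c2 b = 0 \/ c2 a = s.-1 \/ c2 b = s.-1.
Proof. have := cb a; have := cb b; rewrite /Sg => ? ? hs'. lia. Qed.

Lemma S_chain st (a1 b1 a2 b2 a3 b3 : T) : e a1 b1 -> e a3 b3 ->
  Sg a1 b1 -> Sg a2 b2 -> Sg a3 b3 ->
  mono st a1 b1 -> mono st b1 a2 -> mono st a2 b2 -> mono st b2 a3 -> mono st a3 b3 -> False.
Proof.
move=> e1 e3 s1 s2 s3.
have B1 := Lbd e1 s1; have B3 := Lbd e3 s3; have M := Lmid s2.
have := cb a2; have := cb b2.
clear e1 e3 s1 s2 s3.
case: st => [[] []]; rewrite !monoE ?ord_okT ?ord_okF; lia.
Qed.

Lemma we_nth (x : T) p A : A \in walk_edges x p ->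
  exists2 t, t < size p & A = [set nth x (x :: p) t; nth x (x :: p) t.+1].
Proof.
move/(nthP A) => [i]; rewrite size_pairmap => hi <-; exists i => //.
by rewrite /walk_edges (nth_pairmap x A _ hi).
Qed.

Lemma inS_Sg (u v : T) : e u v -> [set u; v] \in Sset -> Sg u v.
Proof.
move=> euv; rewrite inE => /existsP [a /existsP [b /andP [/andP [eab sab] /eqP E]]].
have hu : u \in [set a; b] by rewrite -E set21.
have hv : v \in [set a; b] by rewrite -E set22.
move: hu hv; rewrite !inE => /orP [/eqP hu|/eqP hu] /orP [/eqP hv|/eqP hv]; subst u v.
- by case: (e_irr euv).
- exact: sab.
- exact: Sg_sym.
- by case: (e_irr euv).
Qed.

Lemma geo_S (x : T) p t1 t2 t3 : geodesic e x p -> t1 < t2 -> t2 < t3 -> t3 < size p ->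
  [set nth x (x :: p) t1; nth x (x :: p) t1.+1] \in Sset ->
  [set nth x (x :: p) t2; nth x (x :: p) t2.+1] \in Sset ->
  [set nth x (x :: p) t3; nth x (x :: p) t3.+1] \in Sset -> False.
Proof.
move=> g h12 h23 h3 s1 s2 s3.
move/(pathP x): (g.1) => E0.
have E t : t < size p -> e (nth x (x :: p) t) (nth x (x :: p) t.+1) := E0 t.
have M := geo_mono g.
have m t t' : t <= t' -> t' <= size p -> mono ((c1 x <= c1 (last x p)), (c2 x <= c2 (last x p)))
   (nth x (x :: p) t) (nth x (x :: p) t').
  by move=> a b; apply: M; rewrite a b.
have E1 := E t1 (ltn_trans h12 (ltn_trans h23 h3)).
have E2 := E t2 (ltn_trans h23 h3).
have E3 := E t3 h3.
apply: (S_chain (st := ((c1 x <= c1 (last x p)), (c2 x <= c2 (last x p)))) E1 E3 (inS_Sg E1 s1) (inS_Sg E2 s2) (inS_Sg E3 s3)); apply: m; lia.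
Qed.

Lemma S_gp : edge_gp_set e Sset.
Proof.
split.
  apply/subsetP => A; rewrite !inE => /existsP [a /existsP [b /andP [/andP [eab _] EA]]].
  by apply/existsP; exists a; apply/existsP; exists b; rewrite eab EA.
move=> x p g; rewrite ltnNge; apply/negP => /card_gt2P [A1 [A2 [A3 [[h1 h2 h3] [d12 d23 d31]]]]].
move: h1; rewrite in_set => /andP [s1 /we_nth [t1 l1 E1]].
move: h2; rewrite in_set => /andP [s2 /we_nth [t2 l2 E2]].
move: h3; rewrite in_set => /andP [s3 /we_nth [t3 l3 E3]].
subst A1 A2 A3.
have n12 : t1 != t2 by apply/eqP => E; move: d12; rewrite E eqxx.
have n23 : t2 != t3 by apply/eqP => E; move: d23; rewrite E eqxx.
have n31 : t3 != t1 by apply/eqP => E; move: d31; rewrite E eqxx.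
case: (sort3 n12 n23 n31) => [[a b]|[[a b]|[[a b]|[[a b]|[[a b]|[a b]]]]]].
- exact: (geo_S g a b l3 s1 s2 s3).
- exact: (geo_S g a b l2 s1 s3 s2).
- exact: (geo_S g a b l3 s2 s1 s3).
- exact: (geo_S g a b l1 s2 s3 s1).
- exact: (geo_S g a b l2 s3 s1 s2).
- exact: (geo_S g a b l1 s3 s2 s1).
Qed.


Lemma edge_cases (a b : T) : e a b ->
  (b = hx a /\ (c2 a).+1 < s) \/ (a = hx b /\ (c2 b).+1 < s) \/
  (b = vx a /\ (c1 a).+1 < r) \/ (a = vx b /\ (c1 b).+1 < r).
Proof.
move/e_c => h; have [ra sa] := cb a; have [rb sb] := cb b.
case: h => [[h1 [h2|h2]]|[h1 [h2|h2]]].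
- have ha : (c1 a).+1 < r by lia.
  right; right; left; split => //; apply: c_eq; [rewrite c1vx //; lia | by rewrite c2vx].
- have hb : (c1 b).+1 < r by lia.
  right; right; right; split => //; apply: c_eq; [rewrite c1vx //; lia | by rewrite c2vx].
- have ha : (c2 a).+1 < s by lia.
  left; split => //; apply: c_eq; [by rewrite c1hx | rewrite c2hx //; lia].
- have hb : (c2 b).+1 < s by lia.
  right; left; split => //; apply: c_eq; [by rewrite c1hx | rewrite c2hx //; lia].
Qed.

Lemma S'_sub (S' : {set {set T}}) : S' \subset edge_set e ->
  S' \subset hedge @: Hof S' :|: vedge @: Vof S'.
Proof.
move=> sub; apply/subsetP => A hA.
have := subsetP sub A hA; rewrite inE => /existsP [a /existsP [b /andP [eab /eqP E]]].
subst A; rewrite in_setU.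
case: (edge_cases eab) => [[E h]|[[E h]|[[E h]|[E h]]]]; subst.
- apply/orP; left; apply/imsetP; exists a => //; by rewrite inE h hA.
- apply/orP; left; apply/imsetP; exists b; first by rewrite inE h /hedge setUC hA.
  by rewrite /hedge setUC.
- apply/orP; right; apply/imsetP; exists a => //; by rewrite inE h hA.
- apply/orP; right; apply/imsetP; exists b; first by rewrite inE h /vedge setUC hA.
  by rewrite /vedge setUC.
Qed.

Lemma card_S' (S' : {set {set T}}) : S' \subset edge_set e ->
  #|S'| <= #|Hof S'| + #|Vof S'|.
Proof.
move=> h; apply: leq_trans (subset_leq_card (S'_sub h)) _.
apply: leq_trans (leq_card_setU _ _).1 _; apply: leq_add; exact: leq_imset_card.
Qed.

Lemma countS' (S' : {set {set T}}) : edge_gp_set e S' ->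
  #|Hof S'| + #|Vof S'| <= 2 * r + 2 * s - 8 /\
  (#|Hof S'| + #|Vof S'| = 2 * r + 2 * s - 8 -> Hof S' = Hstar r s /\ Vof S' = Vstar r s).
Proof.
move=> g; apply: (count_main hr hs).
- by move=> x; rewrite inE => /andP [].
- by move=> x; rewrite inE => /andP [].
- exact: fN1 g.
- exact: fN1v g.
- exact: fN2 g.
- exact: fN2v g.
- exact: fN5 g.
- exact: fN5v g.
Qed.

Lemma Hstar_b x : x \in Hstar r s -> (c2 x).+1 < s.
Proof. rewrite inE; lia. Qed.
Lemma Vstar_b x : x \in Vstar r s -> (c1 x).+1 < r.
Proof. rewrite inE; lia. Qed.

Lemma hedge_S x : x \in Hstar r s -> hedge x \in Sset.
Proof.
move=> hx'; have hb := Hstar_b hx'; have k := c2hx hb.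
rewrite inE; apply/existsP; exists x; apply/existsP; exists (hx x); rewrite eqxx andbT.
apply/andP; split.
  by apply: c_e; right; split; [by [] | left; lia].
move: hx'; rewrite inE /Sg c1hx k; lia.
Qed.

Lemma vedge_S x : x \in Vstar r s -> vedge x \in Sset.
Proof.
move=> hx'; have hb := Vstar_b hx'; have k := c1vx hb.
rewrite inE; apply/existsP; exists x; apply/existsP; exists (vx x); rewrite eqxx andbT.
apply/andP; split.
  by apply: c_e; left; split; [by [] | left; lia].
move: hx'; rewrite inE /Sg c2vx k; lia.
Qed.

Lemma row_Hstar (i : 'I_r) : #|row (Hstar r s) i| = if (0 < i) && (i < r.-1) then 2 else 0.
Proof.
case: ifP => hi.
  have p0 : 0 < s by lia. have ps : s.-2 < s by lia.
  have -> : row (Hstar r s) i = [set (i, Ordinal p0); (i, Ordinal ps)].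
    apply/setP => z; rewrite !inE; apply/idP/idP.
      case/andP => /andP [h1 h2] /eqP h3.
      case/orP: h2 => /eqP h2; apply/orP; [left|right]; apply/eqP; apply: c_eq => //.
    by case/orP => /eqP ->; rewrite /c1 /c2 /= hi !eqxx ?orbT.
  rewrite cards2; case: eqP => // /(congr1 (@c2 r s)) /=; rewrite /c2 /=; lia.
apply: eq_card0 => z; rewrite !inE; apply/negP => /andP [/andP [h1 _] /eqP h3].
by rewrite -h3 h1 in hi.
Qed.

Lemma col_Vstar (j : 'I_s) : #|col (Vstar r s) j| = if (0 < j) && (j < s.-1) then 2 else 0.
Proof.
case: ifP => hj.
  have p0 : 0 < r by lia. have ps : r.-2 < r by lia.
  have -> : col (Vstar r s) j = [set (Ordinal p0, j); (Ordinal ps, j)].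
    apply/setP => z; rewrite !inE; apply/idP/idP.
      case/andP => /andP [h1 h2] /eqP h3.
      case/orP: h2 => /eqP h2; apply/orP; [left|right]; apply/eqP; apply: c_eq => //.
    by case/orP => /eqP ->; rewrite /c1 /c2 /= hj !eqxx ?orbT.
  rewrite cards2; case: eqP => // /(congr1 (@c1 r s)) /=; rewrite /c1 /=; lia.
apply: eq_card0 => z; rewrite !inE; apply/negP => /andP [/andP [h1 _] /eqP h3].
by rewrite -h3 h1 in hj.
Qed.

Lemma card_Hstar : #|Hstar r s| = 2 * (r - 2).
Proof.
rewrite cardH (eq_bigr (fun i : 'I_r => if (0 < i) && (i < r.-1) then 2 else 0)).
  by rewrite sum_interior //; lia.
by move=> i _; rewrite row_Hstar.
Qed.

Lemma card_Vstar : #|Vstar r s| = 2 * (s - 2).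
Proof.
rewrite cardV (eq_bigr (fun j : 'I_s => if (0 < j) && (j < s.-1) then 2 else 0)).
  by rewrite sum_interior //; lia.
by move=> j _; rewrite col_Vstar.
Qed.

Lemma card_S_lb : 2 * r + 2 * s - 8 <= #|Sset|.
Proof.
have sub : hedge @: Hstar r s :|: vedge @: Vstar r s \subset Sset.
  apply/subsetP => A; rewrite in_setU => /orP [/imsetP [x hx' ->]|/imsetP [x hx' ->]].
  - exact: hedge_S.
  - exact: vedge_S.
apply: leq_trans (subset_leq_card sub); rewrite cardsU.
have -> : hedge @: Hstar r s :&: vedge @: Vstar r s = set0.
  apply/setP => A; rewrite !inE; apply/negP => /andP [/imsetP [x hx' ->] /imsetP [y hy' E]].
  have k := c2hx (Hstar_b hx').
  have : x \in vedge y by rewrite -E set21.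
  have : hx x \in vedge y by rewrite -E set22.
  rewrite !inE => /orP [/eqP h1|/eqP h1] /orP [/eqP h2|/eqP h2];
    by move: k; rewrite h1 h2 ?c2vx; lia.
rewrite cards0 subn0.
rewrite card_in_imset; last first.
  move=> x y hx' hy' E.
  have kx := c2hx (Hstar_b hx'); have ky := c2hx (Hstar_b hy').
  have : x \in hedge y by rewrite -E set21.
  have : y \in hedge x by rewrite E set21.
  rewrite !inE => /orP [/eqP h1|/eqP h1] /orP [/eqP h2|/eqP h2] //.
  by move: kx ky; rewrite -h1 -h2; lia.
rewrite card_in_imset; last first.
  move=> x y hx' hy' E.
  have kx := c1vx (Vstar_b hx'); have ky := c1vx (Vstar_b hy').
  have : x \in vedge y by rewrite -E set21.
  have : y \in vedge x by rewrite E set21.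
  rewrite !inE => /orP [/eqP h1|/eqP h1] /orP [/eqP h2|/eqP h2] //.
  by move: kx ky; rewrite -h1 -h2; lia.
rewrite card_Hstar card_Vstar; lia.
Qed.

Lemma main_res : exists S : {set {set T}},
    gpe_set e S /\ forall S' : {set {set T}}, gpe_set e S' -> S' = S.
Proof.
exists Sset.
have gS := S_gp.
have cS := card_S_lb.
have ub S' : edge_gp_set e S' -> #|S'| <= 2 * r + 2 * s - 8.
  move=> g; have [c _] := countS' g; exact: leq_trans (card_S' g.1) c.
split; first by split => // S' g; exact: leq_trans (ub S' g) cS.
move=> S' [g mx].
have hle := mx _ gS.
have [c1' c2'] := countS' g; have cs := card_S' g.1.
have [eH eV] : Hof S' = Hstar r s /\ Vof S' = Vstar r s.
  apply: c2'; apply/eqP; rewrite eqn_leq c1' /=; exact: leq_trans cS (leq_trans hle cs).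
apply/setP => A; apply/idP/idP.
  move=> hA; have := subsetP (S'_sub g.1) A hA; rewrite in_setU eH eV.
  by case/orP => /imsetP [x hx' ->]; [exact: hedge_S | exact: vedge_S].
rewrite inE => /existsP [a /existsP [b /andP [/andP [eab sab] /eqP E]]]; subst A.
have sba := Sg_sym sab.
case: (edge_cases eab) => [[E h]|[[E h]|[[E h]|[E h]]]]; subst.
- have : a \in Hof S'.
    rewrite eH inE; move: sab; rewrite /Sg c1hx (c2hx h); lia.
  by rewrite inE => /andP [_].
- have : b \in Hof S'.
    rewrite eH inE; move: sba; rewrite /Sg c1hx (c2hx h); lia.
  by rewrite inE setUC => /andP [_].
- have : a \in Vof S'.
    rewrite eV inE; move: sab; rewrite /Sg c2vx (c1vx h); lia.
  by rewrite inE => /andP [_].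
- have : b \in Vof S'.
    rewrite eV inE; move: sba; rewrite /Sg c2vx (c1vx h); lia.
  by rewrite inE setUC => /andP [_].
Qed.

End Main.

Theorem theorem4p2 (r s : nat) : 5 <= r -> 5 <= s ->
  exists S : {set {set 'I_r * 'I_s}},
    gpe_set (grid_rel r s) S /\
    forall S' : {set {set 'I_r * 'I_s}}, gpe_set (grid_rel r s) S' -> S' = S.
Proof.
move=> hr hs; exact: (main_res hr hs).
Qed.
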